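(* The category of exact $\mathfrak{K}$-modules $M$ with $\alpha_{21}=0$ is equivalent to the category of triples $(M_0,\dot M_2,\dot\alpha)$ where (i) $M_0$ is a $\mathbb{Z}/2$-graded $\mathfrak{S}$-module with $\ker(1-t)=\operatorname{im}N(t)$; (ii) $\dot M_2\subseteq H_0(M_0):=\ker N(t)/\operatorname{im}(1-t)$ is a $\mathbb{Z}/2$-graded $\mathbb{Z}/p$-vector subspace; (iii) $\dot\alpha\colon\dot M_2\to H_0(M_0)/\dot M_2$ is a grading-reversing isomorphism. Morphisms of triples $(M_0,\dot M_2,\dot\alpha)\to(L_0,\dot L_2,\dot\beta)$ are grading-preserving $\mathfrak{S}$-module homomorphisms $f_0\colon M_0\to L_0$ such that $H_0(f_0)$ maps $\dot M_2$ to $\dot L_2$ and intertwines $\dot\alpha$ and $\dot\beta$. The homomorphism of exact $\mathfrak{K}$-modules induced by a morphism of triples $f_0$ is injective if and only if $f_0$ is injective and $f_0^{-1}(\tilde L_2)=\tilde M_2$; it is surjective if and only if $f_0$ is surjective and $f_0(\tilde M_2)=\tilde L_2$, where $\tilde M_2\subseteq\ker N(t)\subseteq M_0$ and $\tilde L_2\subseteq L_0$ denote the preimages of $\dot M_2$ and $\dot L_2$.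
   Context: Fix a prime $p$, $N(x)=1+x+\dots+x^{p-1}$, $\mathfrak{S}=\mathbb{Z}[t]/(t^p-1)$. A $\mathfrak{K}$-module $M$ amounts to $\mathbb{Z}/2$-graded abelian groups $M_0,M_1,M_2$ with homomorphisms $\alpha_{jk}\colon M_k\to M_j$ ($j\neq k$; $\alpha_{12},\alpha_{21}$ grading-reversing, others grading-preserving) with $\alpha_{jk}\alpha_{km}=0$ for $\{j,k,m\}=\{0,1,2\}$ and, for $t_0:=1-\alpha_{02}\alpha_{20}$ on $M_0$, $s_1:=1-\alpha_{12}\alpha_{21}$ on $M_1$, $t_2:=1-\alpha_{20}\alpha_{02}$, $s_2:=1-\alpha_{21}\alpha_{12}$ on $M_2$: $\alpha_{01}\alpha_{10}=N(t_0)$, $\alpha_{10}\alpha_{01}=N(s_1)$, $N(t_2)+N(s_2)=p$; morphisms are triples of grading-preserving maps commuting with all $\alpha_{jk}$. $M$ is exact if the cyclic sequences $M_0\xrightarrow{\alpha_{10}}M_1\xrightarrow{\alpha_{21}}M_2\xrightarrow{\alpha_{02}}M_0$ and $M_0\xrightarrow{\alpha_{20}}M_2\xrightarrow{\alpha_{12}}M_1\xrightarrow{\alpha_{01}}M_0$ are exact. The equivalence sends $M$ (with $\alpha_{21}=0$, so $\alpha_{02}$ is injective and $\alpha_{10}$ surjective with kernel $\alpha_{02}(M_2)$) to the triple with $M_0$ carrying $t=t_0$, $\dot M_2:=\alpha_{02}(M_2)/\operatorname{im}(1-t)$, and $\dot\alpha([\alpha_{02}(x)]):=[y]$ for $y\in\ker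 N(t)$ with $\alpha_{10}(y)=\alpha_{12}(x)$; it sends a $\mathfrak{K}$-module homomorphism to its component on $M_0$. *)

(* Defs.v *)
From HB Require Import structures.
From mathcomp Require Import all_boot all_algebra.
From mathcomp Require Import boolp.
From Stdlib Require Import ClassicalEpsilon.
Set Implicit Arguments. Unset Strict Implicit. Unset Printing Implicit Defensive.
Import GRing.Theory.
Local Open Scope ring_scope.

Definition gen (V : zmodType) (A : V -> Prop) (x : V) : Prop :=
  forall S : V -> Prop, S 0 -> (forall u v, S u -> S v -> S (u - v)) ->
    (forall u, A u -> S u) -> S x.

Lemma gen0 (V : zmodType) (A : V -> Prop) : gen A 0. Proof. by move=> S. Qed.
Arguments gen0 {V} A.
Lemma genB (V : zmodType) (A : V -> Prop) u v : gen A u -> gen A v -> gen A (u - v).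
Proof. rewrite /gen => hu hv S S0 SB SA; apply: (SB); [exact: (hu S S0 SB SA)|exact: (hv S S0 SB SA)]. Qed.
Arguments genB {V A u v}.
Lemma genN (V : zmodType) (A : V -> Prop) u : gen A u -> gen A (- u).
Proof. by move=> h; have := genB (gen0 A) h; rewrite sub0r. Qed.
Arguments genN {V A u}.
Lemma genD (V : zmodType) (A : V -> Prop) u v : gen A u -> gen A v -> gen A (u + v).
Proof. by move=> hu hv; have := genB hu (genN hv); rewrite opprK. Qed.
Arguments genD {V A u v}.

Definition rep (V : zmodType) (A B : V -> Prop) (x : V) : V :=
  choose (fun y => `[< gen A y /\ gen B (y - x) >]) x.

Lemma rep_spec (V : zmodType) (A B : V -> Prop) x :
  gen A x -> gen A (rep A B x) /\ gen B (rep A B x - x).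
Proof.
move=> hx.
have h := @chooseP V (fun y => `[< gen A y /\ gen B (y - x) >]) x.
have /asboolP // : `[< gen A (rep A B x) /\ gen B (rep A B x - x) >].
apply: h; apply/asboolP; split=> //.
by rewrite subrr; apply: gen0.
Qed.

Lemma rep_eq (V : zmodType) (A B : V -> Prop) x y :
  gen A x -> gen A y -> gen B (x - y) -> rep A B x = rep A B y.
Proof.
move=> hx hy hxy; rewrite /rep.
have E : (fun z => `[< gen A z /\ gen B (z - x) >]) =1
         (fun z => `[< gen A z /\ gen B (z - y) >]).
  move=> z; apply/asboolP/asboolP => -[hz h]; split=> //.
    by have := genD h hxy; rewrite addrA subrK.
  by have := genB h hxy; rewrite opprB addrA subrK.
rewrite (eq_choose E); apply: choose_id; apply/asboolP; split=> //.
  by rewrite subrr; apply: gen0.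
Qed.

Definition SQ (V : zmodType) (A B : V -> Prop) :=
  {x : V | `[< gen A x >] && (rep A B x == x)}.
HB.instance Definition _ (V : zmodType) (A B : V -> Prop) := Choice.on (SQ A B).

Definition cls_rep (V : zmodType) (A B : V -> Prop) (x : V) : V :=
  rep A B (if `[< gen A x >] then x else 0).

Lemma cls_proof (V : zmodType) (A B : V -> Prop) x :
  `[< gen A (cls_rep A B x) >] && (rep A B (cls_rep A B x) == cls_rep A B x).
Proof.
rewrite /cls_rep; set x' := (if _ then _ else _); have hx' : gen A x'.
  by rewrite /x'; case: asboolP => // _; apply: gen0.
have [hy hyx] := rep_spec B hx'.
apply/andP; split; first by apply/asboolP.
by apply/eqP; rewrite (rep_eq hy hx' hyx).
Qed.

(* the class of x (x is assumed to lie in the generated subgroup of A) *)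
Definition cls (V : zmodType) (A B : V -> Prop) (x : V) : SQ A B :=
  @exist V (fun y => `[< gen A y >] && (rep A B y == y)) _ (cls_proof A B x).

Lemma SQ_gen (V : zmodType) (A B : V -> Prop) (a : SQ A B) : gen A (sval a).
Proof. by case: a => x /= /andP[/asboolP]. Qed.

Lemma cls_val (V : zmodType) (A B : V -> Prop) (a : SQ A B) : cls A B (sval a) = a.
Proof.
apply: val_inj; case: a => x /= /andP[/asboolP hx /eqP rx].
by rewrite /= /cls_rep (asboolT hx).
Qed.

Lemma cls_rel (V : zmodType) (A B : V -> Prop) x :
  gen A x -> gen B (sval (cls A B x) - x).
Proof. by move=> hx /=; rewrite /cls_rep (asboolT hx); case: (rep_spec B hx). Qed.

Lemma cls_eq (V : zmodType) (A B : V -> Prop) x y :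
  gen A x -> gen A y -> gen B (x - y) -> cls A B x = cls A B y.
Proof.
move=> hx hy hxy; apply: val_inj => /=.
by rewrite /cls_rep (asboolT hx) (asboolT hy); apply: rep_eq.
Qed.

Definition sq_zero (V : zmodType) (A B : V -> Prop) : SQ A B := cls A B 0.
Definition sq_add (V : zmodType) (A B : V -> Prop) (a b : SQ A B) : SQ A B :=
  cls A B (sval a + sval b).
Definition sq_opp (V : zmodType) (A B : V -> Prop) (a : SQ A B) : SQ A B :=
  cls A B (- sval a).

Lemma zid4 (V:zmodType) (a b c r1 r2 : V) :
  a + r2 - (r1 + c) = - (r1 - (a + b) - (r2 - (b + c))).
Proof.
rewrite !opprD !opprK !addrA.
by rewrite [- r1 + a + b + r2]addrAC addrK -[- r1 + a + r2]addrA [- r1 + _]addrC.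
Qed.

Lemma sq_addA (V : zmodType) (A B : V -> Prop) : associative (@sq_add V A B).
Proof.
move=> a b c; rewrite /sq_add.
have ha := SQ_gen a; have hb := SQ_gen b; have hc := SQ_gen c.
have hab := genD ha hb; have hbc := genD hb hc.
apply: cls_eq; [apply: genD=> //; apply: SQ_gen | apply: genD=> //; apply: SQ_gen|].
rewrite (zid4 _ (sval b)); apply: genN.
exact: genB (cls_rel (B:=B) hab) (cls_rel (B:=B) hbc).
Qed.

Lemma sq_addC (V : zmodType) (A B : V -> Prop) : commutative (@sq_add V A B).
Proof. by move=> a b; rewrite /sq_add addrC. Qed.

Lemma sq_add0r (V : zmodType) (A B : V -> Prop) : left_id (@sq_zero V A B) (@sq_add V A B).
Proof.
move=> a; rewrite /sq_add /sq_zero -[RHS]cls_val.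
have h0 := cls_rel (B:=B) (gen0 A).
apply: cls_eq; [apply: genD=> //; apply: SQ_gen | exact: SQ_gen |].
by rewrite addrK; move: h0; rewrite subr0.
Qed.

Lemma sq_addNr (V : zmodType) (A B : V -> Prop) :
  left_inverse (@sq_zero V A B) (@sq_opp V A B) (@sq_add V A B).
Proof.
move=> a; rewrite /sq_add /sq_zero /sq_opp.
have ha := SQ_gen a; have hN := cls_rel (B:=B) (genN ha).
apply: cls_eq; [apply: genD=> //; apply: SQ_gen | exact: gen0 |].
by rewrite subr0; move: hN; rewrite opprK.
Qed.

HB.instance Definition _ (V : zmodType) (A B : V -> Prop) :=
  GRing.isZmodule.Build (SQ A B) (@sq_addA V A B) (@sq_addC V A B)
    (@sq_add0r V A B) (@sq_addNr V A B).

Definition sqmap (V W : zmodType) (A B : V -> Prop) (A' B' : W -> Prop)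
  (f : V -> W) (x : SQ A B) : SQ A' B' := cls A' B' (f (sval x)).
Arguments sqmap {V W A B A' B'} f x.
Arguments cls {V} A B x.

(* subgroup D of H, as an abelian group, and quotient H / D *)
Definition subg {H : zmodType} (D : H -> Prop) : zmodType := SQ D (fun x => x = 0).
Definition quog {H : zmodType} (D : H -> Prop) : zmodType := SQ (fun _ => True) D.

Unset Implicit Arguments.
Definition additive_fn {U W : zmodType} (f : U -> W) : Prop :=
  forall x y, f (x - y) = f x - f y.
Definition surj {U W : Type} (f : U -> W) : Prop := forall y, exists x, f x = y.

(* Z/2-graded abelian group: its homogeneous components, indexed by the degree *)
Definition grp := bool -> zmodType.
Definition nn (G : grp) (b : bool) : G (~~ ~~ b) -> G b :=
  match b return G (~~ ~~ b) -> G b with true => id | false => id end.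

Definition Nop (p : nat) {V : zmodType} (f : V -> V) (x : V) : V :=
  \sum_(i < p) iter i f x.

Record KData := KD {
  K0 : grp; K1 : grp; K2 : grp;
  a10 : forall b, K0 b -> K1 b;
  a01 : forall b, K1 b -> K0 b;
  a20 : forall b, K0 b -> K2 b;
  a02 : forall b, K2 b -> K0 b;
  a12 : forall b, K2 b -> K1 (~~ b);
  a21 : forall b, K1 b -> K2 (~~ b) }.

Definition t0 (M : KData) b (x : K0 M b) : K0 M b := x - a02 M b (a20 M b x).
Definition s1 (M : KData) b (y : K1 M b) : K1 M b :=
  y - nn (K1 M) b (a12 M (~~ b) (a21 M b y)).
Definition t2 (M : KData) b (z : K2 M b) : K2 M b := z - a20 M b (a02 M b z).
Definition s2 (M : KData) b (z : K2 M b) : K2 M b :=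
  z - nn (K2 M) b (a21 M (~~ b) (a12 M b z)).

Record is_Kmodule (p : nat) (M : KData) : Prop := {
  a10_add : forall b, additive_fn (a10 M b);
  a01_add : forall b, additive_fn (a01 M b);
  a20_add : forall b, additive_fn (a20 M b);
  a02_add : forall b, additive_fn (a02 M b);
  a12_add : forall b, additive_fn (a12 M b);
  a21_add : forall b, additive_fn (a21 M b);
  rel012 : forall b z, a01 M (~~ b) (a12 M b z) = 0;
  rel021 : forall b y, a02 M (~~ b) (a21 M b y) = 0;
  rel102 : forall b z, a10 M b (a02 M b z) = 0;
  rel120 : forall b x, a12 M b (a20 M b x) = 0;
  rel201 : forall b y, a20 M b (a01 M b y) = 0;
  rel210 : forall b x, a21 M b (a10 M b x) = 0;
  relN0 : forall b x, a01 M b (a10 M b x) = Nop p (t0 M b) x;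
  relN1 : forall b y, a10 M b (a01 M b y) = Nop p (s1 M b) y;
  relN2 : forall b z, Nop p (t2 M b) z + Nop p (s2 M b) z = z *+ p }.

(* exactness of M0 -a10-> M1 -a21-> M2 -a02-> M0 and M0 -a20-> M2 -a12-> M1 -a01-> M0 *)
Record is_exact (M : KData) : Prop := {
  ex1 : forall b (y : K1 M b), a21 M b y = 0 <-> exists x, a10 M b x = y;
  ex2 : forall b (z : K2 M (~~ b)), a02 M (~~ b) z = 0 <-> exists y, a21 M b y = z;
  ex0 : forall b (x : K0 M b), a10 M b x = 0 <-> exists z, a02 M b z = x;
  ex2' : forall b (z : K2 M b), a12 M b z = 0 <-> exists x, a20 M b x = z;
  ex1' : forall b (y : K1 M (~~ b)), a01 M (~~ b) y = 0 <-> exists z, a12 M b z = y;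
  ex0' : forall b (x : K0 M b), a20 M b x = 0 <-> exists y, a01 M b y = x }.

Definition Kexact0 (p : nat) (M : KData) : Prop :=
  is_Kmodule p M /\ is_exact M /\ (forall b y, a21 M b y = 0).

Record KHom (M L : KData) := KH {
  h0 : forall b, K0 M b -> K0 L b;
  h1 : forall b, K1 M b -> K1 L b;
  h2 : forall b, K2 M b -> K2 L b }.
Arguments h0 {M L} k b.
Arguments h1 {M L} k b.
Arguments h2 {M L} k b.

Record is_Khom (M L : KData) (f : KHom M L) : Prop := {
  h0_add : forall b, additive_fn (h0 f b);
  h1_add : forall b, additive_fn (h1 f b);
  h2_add : forall b, additive_fn (h2 f b);
  c10 : forall b x, h1 f b (a10 M b x) = a10 L b (h0 f b x);
  c01 : forall b y, h0 f b (a01 M b y) = a01 L b (h1 f b y);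
  c20 : forall b x, h2 f b (a20 M b x) = a20 L b (h0 f b x);
  c02 : forall b z, h0 f b (a02 M b z) = a02 L b (h2 f b z);
  c12 : forall b z, h1 f (~~ b) (a12 M b z) = a12 L b (h2 f b z);
  c21 : forall b y, h2 f (~~ b) (a21 M b y) = a21 L b (h1 f b y) }.

Definition kerN (p : nat) {V : zmodType} (t : V -> V) : V -> Prop :=
  fun x => Nop p t x = 0.
Definition im1t {V : zmodType} (t : V -> V) : V -> Prop :=
  fun x => exists y, y - t y = x.
Definition H0 (p : nat) {V : zmodType} (t : V -> V) : zmodType :=
  SQ (kerN p t) (im1t t).
Definition H0cls (p : nat) {V : zmodType} (t : V -> V) (x : V) : H0 p t :=
  cls (kerN p t) (im1t t) x.

Record TData (p : nat) := TD {
  T0 : grp;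
  tt : forall b, T0 b -> T0 b;
  D2 : forall b, H0 p (tt b) -> Prop;
  al : forall b, subg (D2 b) -> quog (D2 (~~ b)) }.
Arguments T0 {p} t b.
Arguments tt {p} t b.
Arguments D2 {p} t b.
Arguments al {p} t b.

(* Z/p-vector subspace (scalars k mod p act as x *+ k) *)
Definition zp_subspace {H : zmodType} (D : H -> Prop) : Prop :=
  D 0 /\ (forall x y, D x -> D y -> D (x - y)) /\ (forall (k : nat) x, D x -> D (x *+ k)).

Record is_triple (p : nat) (T : TData p) : Prop := {
  tt_add : forall b, additive_fn (tt T b);
  tt_p : forall b x, iter p (tt T b) x = x;
  tt_ker : forall b x, x - tt T b x = 0 <-> exists y, Nop p (tt T b) y = x;
  D2_sub : forall b, zp_subspace (D2 T b);
  al_add : forall b, additive_fn (al T b);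
  al_bij : forall b, bijective (al T b) }.

Definition H0map {p : nat} {T T' : TData p} (f : forall b, T0 T b -> T0 T' b) b :
  H0 p (tt T b) -> H0 p (tt T' b) := sqmap (f b).

Record is_tmorph (p : nat) (T T' : TData p) (f : forall b, T0 T b -> T0 T' b) : Prop := {
  tm_add : forall b, additive_fn (f b);
  tm_t : forall b x, f b (tt T b x) = tt T' b (f b x);
  tm_D2 : forall b h, D2 T b h -> D2 T' b (H0map f b h);
  tm_al : forall b (u : subg (D2 T b)),
    al T' b (sqmap (H0map f b) u) = sqmap (H0map f (~~ b)) (al T b u) }.

Definition tilde {p : nat} (T : TData p) b (x : T0 T b) : Prop :=
  Nop p (tt T b) x = 0 /\ D2 T b (H0cls p (tt T b) x).

Definition Fal (p : nat) (M : KData)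
  (D : forall b, H0 p (t0 M b) -> Prop) b (u : subg (D b)) : quog (D (~~ b)) :=
  let x := sval (sval u) in
  let z := epsilon (inhabits (0 : K2 M b)) (fun z => a02 M b z = x) in
  let y := epsilon (inhabits (0 : K0 M (~~ b)))
             (fun y => Nop p (t0 M (~~ b)) y = 0 /\ a10 M (~~ b) y = a12 M b z) in
  cls _ _ (H0cls p (t0 M (~~ b)) y).

Definition FD2 (p : nat) (M : KData) b : H0 p (t0 M b) -> Prop :=
  fun h => exists z : K2 M b, H0cls p (t0 M b) (a02 M b z) = h.

Definition Ftri (p : nat) (M : KData) : TData p :=
  @TD p (K0 M) (t0 M) (FD2 p M) (Fal p M (FD2 p M)).

(* Main.v *)
Require Import Defs.
From HB Require Import structures.
From mathcomp Require Import all_boot all_algebra.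
From mathcomp Require Import boolp.
From Stdlib Require Import ClassicalEpsilon.
Set Implicit Arguments. Unset Strict Implicit. Unset Printing Implicit Defensive.
Import GRing.Theory.
Local Open Scope ring_scope.

Definition subgrp {V : zmodType} (A : V -> Prop) :=
  A 0 /\ forall u v, A u -> A v -> A (u - v).

Lemma gen_sub (V : zmodType) (A : V -> Prop) x : subgrp A -> gen A x -> A x.
Proof. by move=> [h0 hB] hx; apply: hx. Qed.

Lemma gen_in (V : zmodType) (A : V -> Prop) x : A x -> gen A x.
Proof. by move=> hx S _ _ hS; apply: hS. Qed.

Lemma subgrp_gen (V : zmodType) (A : V -> Prop) : subgrp (gen A).
Proof. by split; [apply: gen0 | move=> u v; apply: genB]. Qed.

Lemma subgrpN (V : zmodType) (A : V -> Prop) x : subgrp A -> A x -> A (- x).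
Proof. by move=> [h0 hB] hx; rewrite -sub0r; apply: hB. Qed.

Lemma subgrpD (V : zmodType) (A : V -> Prop) x y : subgrp A -> A x -> A y -> A (x + y).
Proof. by move=> hA hx hy; rewrite -[y]opprK; apply: hA.2 => //; apply: subgrpN. Qed.

Lemma subgrpMn (V : zmodType) (A : V -> Prop) x k : subgrp A -> A x -> A (x *+ k).
Proof.
move=> hA hx; elim: k => [|k IH]; first by rewrite mulr0n; apply: hA.1.
by rewrite mulrS; apply: subgrpD.
Qed.

Lemma subrACA' (V : zmodType) (a b c d : V) : (a - b) - (c - d) = (a - c) - (b - d).
Proof. by rewrite !opprB addrACA [RHS]addrACA (addrC (-b)). Qed.

Lemma add0 (U W : zmodType) (f : U -> W) : additive_fn f -> f 0 = 0.
Proof. by move=> hf; have h := hf 0 0; rewrite !subrr in h. Qed.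
Lemma addN (U W : zmodType) (f : U -> W) x : additive_fn f -> f (- x) = - f x.
Proof. by move=> hf; rewrite -sub0r hf (add0 hf) sub0r. Qed.
Lemma addD (U W : zmodType) (f : U -> W) x y : additive_fn f -> f (x + y) = f x + f y.
Proof. by move=> hf; have := hf x (- y); rewrite opprK => ->; rewrite (addN y hf) opprK. Qed.
Lemma add_sum (U W : zmodType) (f : U -> W) n (F : 'I_n -> U) :
  additive_fn f -> f (\sum_(i < n) F i) = \sum_(i < n) f (F i).
Proof.
move=> hf; elim: n F => [|n IH] F; first by rewrite !big_ord0 (add0 hf).
by rewrite !big_ord_recr /= (addD (f:=f)) // IH.
Qed.
Lemma add_comp (U V W : zmodType) (f : U -> V) (g : V -> W) :
  additive_fn f -> additive_fn g -> additive_fn (fun x => g (f x)).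
Proof. by move=> hf hg x y; rewrite hf hg. Qed.
Lemma add_iter (U : zmodType) (t : U -> U) n : additive_fn t -> additive_fn (iter n t).
Proof. by move=> ht; elim: n => [|n IH] x y //=; rewrite IH ht. Qed.
Lemma Nop_add (U : zmodType) p (t : U -> U) : additive_fn t -> additive_fn (Nop p t).
Proof.
move=> ht x y; rewrite /Nop -sumrB; apply: eq_bigr => i _; exact: add_iter.
Qed.
Lemma iter_morph (U W : zmodType) (f : U -> W) t t' n x :
  (forall x, f (t x) = t' (f x)) -> f (iter n t x) = iter n t' (f x).
Proof. by move=> h; elim: n => [|n IH] //=; rewrite h IH. Qed.
Lemma Nop_morph (U W : zmodType) p (f : U -> W) t t' x :
  additive_fn f -> (forall x, f (t x) = t' (f x)) -> f (Nop p t x) = Nop p t' (f x).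
Proof.
move=> hf h; rewrite /Nop (add_sum (f:=f)) //; apply: eq_bigr => i _; exact: iter_morph.
Qed.
Lemma NopS (U : zmodType) n (t : U -> U) x :
  additive_fn t -> t (Nop n t x) = Nop n t x + iter n t x - x.
Proof.
move=> ht; have e1 : Nop n.+1 t x = x + t (Nop n t x).
  rewrite /Nop big_ord_recl /= (add_sum (f:=t)) //.
have e2 : Nop n.+1 t x = Nop n t x + iter n t x by rewrite /Nop big_ord_recr.
by rewrite -e2 e1 (addrC x) addrK.
Qed.
Lemma Nop_tele (U : zmodType) n (t : U -> U) x :
  additive_fn t -> Nop n t x - t (Nop n t x) = x - iter n t x.
Proof.
move=> ht; rewrite NopS //; move: (Nop n t x) (iter n t x) => a c.
by rewrite opprB addrA (addrC a x) addrKA.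
Qed.

Lemma gen_map (V W : zmodType) (A : V -> Prop) (A' : W -> Prop) (f : V -> W) :
  additive_fn f -> (forall x, A x -> gen A' (f x)) -> forall x, gen A x -> gen A' (f x).
Proof.
move=> hf hA x hx; apply: (hx (fun x => gen A' (f x))) => //.
- by rewrite (add0 hf); apply: gen0.
- by move=> u v hu hv; rewrite hf; apply: genB.
Qed.

Lemma SQ_eqP (V : zmodType) (A B : V -> Prop) (a b : SQ A B) :
  a = b <-> gen B (sval a - sval b).
Proof.
split=> [->|h]; first by rewrite subrr; apply: gen0.
by rewrite -(cls_val a) -(cls_val b); apply: cls_eq => //; apply: SQ_gen.
Qed.

Lemma cls_eqP (V : zmodType) (A B : V -> Prop) x y : gen A x -> gen A y ->
  cls A B x = cls A B y <-> gen B (x - y).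
Proof.
move=> hx hy; split; last exact: cls_eq.
move=> e; have h1 := cls_rel (B:=B) hx; have h2 := cls_rel (B:=B) hy.
rewrite e in h1; have := genB h2 h1.
by rewrite opprB addrC addrA subrK.
Qed.

Lemma SQ_clsP (V : zmodType) (A B : V -> Prop) (a : SQ A B) x : gen A x ->
  a = cls A B x <-> gen B (sval a - x).
Proof. by move=> hx; rewrite -{1}(cls_val a) cls_eqP //; apply: SQ_gen. Qed.

Lemma SQ_addE (V : zmodType) (A B : V -> Prop) (a b : SQ A B) :
  a + b = cls A B (sval a + sval b).
Proof. by []. Qed.
Lemma SQ_oppE (V : zmodType) (A B : V -> Prop) (a : SQ A B) :
  - a = cls A B (- sval a).
Proof. by []. Qed.
Lemma SQ_zeroE (V : zmodType) (A B : V -> Prop) : (0 : SQ A B) = cls A B 0.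
Proof. by []. Qed.

Lemma cls_add (V : zmodType) (A B : V -> Prop) x y : gen A x -> gen A y ->
  cls A B (x + y) = cls A B x + cls A B y.
Proof.
move=> hx hy; rewrite SQ_addE; apply/cls_eqP; first exact: genD.
  by apply: genD; apply: SQ_gen.
have h := genN (genD (cls_rel (B:=B) hx) (cls_rel (B:=B) hy)).
by move: h; rewrite opprD !opprB addrACA -opprD.
Qed.
Lemma cls_opp (V : zmodType) (A B : V -> Prop) x : gen A x ->
  cls A B (- x) = - cls A B x.
Proof.
move=> hx; rewrite SQ_oppE; apply/cls_eqP; first exact: genN.
  by apply: genN; apply: SQ_gen.
by rewrite opprK addrC; apply: cls_rel.
Qed.
Lemma cls_sub (V : zmodType) (A B : V -> Prop) x y : gen A x -> gen A y ->
  cls A B (x - y) = cls A B x - cls A B y.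
Proof. by move=> hx hy; rewrite cls_add ?cls_opp //; apply: genN. Qed.
Lemma cls0 (V : zmodType) (A B : V -> Prop) : cls A B 0 = 0.
Proof. by []. Qed.

Lemma cls_eq0 (V : zmodType) (A B : V -> Prop) x : gen A x ->
  cls A B x = 0 <-> gen B x.
Proof. by move=> hx; rewrite -cls0 cls_eqP ?subr0 //; apply: gen0. Qed.

Lemma gen_eq0 (V : zmodType) (x : V) : gen (fun y => y = 0) x <-> x = 0.
Proof.
split; last by move=> ->; apply: gen0.
by apply: gen_sub; split=> // u v -> ->; rewrite subr0.
Qed.

Lemma sval_subg (H : zmodType) (D : H -> Prop) x : gen D x ->
  sval (cls D (fun y => y = 0) x) = x.
Proof. move=> hx; apply/eqP; rewrite -subr_eq0; apply/eqP; apply/gen_eq0; exact: cls_rel. Qed.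

Lemma subg_val (H : zmodType) (D : H -> Prop) (a b : subg D) :
  a = b <-> sval a = sval b.
Proof.
rewrite SQ_eqP gen_eq0; split=> [/eqP|->]; last by rewrite subrr.
by rewrite subr_eq0 => /eqP.
Qed.

Lemma sqmap_cls (V W : zmodType) (A B : V -> Prop) (A' B' : W -> Prop) (f : V -> W) x :
  additive_fn f -> (forall x, A x -> gen A' (f x)) -> (forall x, B x -> gen B' (f x)) ->
  gen A x -> sqmap (A:=A) (B:=B) (A':=A') (B':=B') f (cls A B x) = cls A' B' (f x).
Proof.
move=> hf hA hB hx; rewrite /sqmap; apply/cls_eqP.
- by apply: (gen_map hf hA); apply: SQ_gen.
- exact: (gen_map hf hA).
- by rewrite -hf; apply: (gen_map hf hB); apply: cls_rel.
Qed.

Lemma sqmap_add (V W : zmodType) (A B : V -> Prop) (A' B' : W -> Prop) (f : V -> W) :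
  additive_fn f -> (forall x, A x -> gen A' (f x)) -> (forall x, B x -> gen B' (f x)) ->
  additive_fn (sqmap (A:=A) (B:=B) (A':=A') (B':=B') f).
Proof.
move=> hf hA hB a b; rewrite -(cls_val a) -(cls_val b).
have ha := SQ_gen a; have hb := SQ_gen b.
rewrite -cls_sub // !sqmap_cls //; last by apply: genB.
by rewrite hf cls_sub //; apply: (gen_map hf hA).
Qed.

Lemma subg_svalB (H : zmodType) (D : H -> Prop) (a b : subg D) :
  sval (a - b) = sval a - sval b.
Proof.
have ha := SQ_gen a; have hb := SQ_gen b.
by rewrite -{1}(cls_val a) -{1}(cls_val b) -cls_sub // sval_subg //; apply: genB.
Qed.

Lemma subg_sval0 (H : zmodType) (D : H -> Prop) : sval (0 : subg D) = 0.
Proof. by rewrite SQ_zeroE sval_subg //; apply: gen0. Qed.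

Lemma inj_surj_bij (U W : zmodType) (f : U -> W) :
  injective f -> (forall y, exists x, f x = y) -> bijective f.
Proof.
move=> hi hs; exists (fun y => epsilon (inhabits 0) (fun x => f x = y)).
  by move=> x; apply: hi; apply: (epsilon_spec (inhabits 0) (fun x' => f x' = f x)); exists x.
by move=> y; apply: (epsilon_spec (inhabits 0) (fun x' => f x' = y)).
Qed.


Lemma a02_inj p (M : KData) b z : Kexact0 p M -> a02 M b z = 0 -> z = 0.
Proof.
move=> [_ [EX h21]]; case: b z => z hz;
 [have := (ex2 _ EX false z).1 hz | have := (ex2 _ EX true z).1 hz];
 by case=> y <-; rewrite h21.
Qed.

Lemma add_inj (U W : zmodType) (f : U -> W) :
  additive_fn f -> (forall x, f x = 0 -> x = 0) -> injective f.
Proof. by move=> hf h x y e; apply/eqP; rewrite -subr_eq0; apply/eqP/h; rewrite hf e subrr. Qed.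

Lemma a02_injective p (M : KData) b : Kexact0 p M -> injective (a02 M b).
Proof. move=> hM; apply: add_inj; [exact: (a02_add _ _ hM.1 b) | move=> z; exact: a02_inj hM]. Qed.

Lemma a10_surj p (M : KData) b y : Kexact0 p M -> exists x, a10 M b x = y.
Proof. by move=> [_ [EX h21]]; apply/(ex1 _ EX); apply: h21. Qed.

Lemma a10_ker p (M : KData) b x : Kexact0 p M -> a10 M b x = 0 <-> exists z, a02 M b z = x.
Proof. by move=> [_ [EX _]]; exact: ex0 _ EX b x. Qed.

Lemma t0E (M : KData) b x : x - t0 M b x = a02 M b (a20 M b x).
Proof. by rewrite /t0 opprB addrC subrK. Qed.

Lemma t0_add p (M : KData) b : Kexact0 p M -> additive_fn (t0 M b).
Proof.
move=> [KM _] x y; rewrite /t0 (a20_add _ _ KM) (a02_add _ _ KM).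
by rewrite subrACA'.
Qed.

Lemma kerN_sub p (V : zmodType) (t : V -> V) : additive_fn t -> subgrp (kerN p t).
Proof.
move=> ht; split; first by rewrite /kerN (add0 (Nop_add p ht)).
by move=> u v; rewrite /kerN (Nop_add p ht) => -> ->; rewrite subrr.
Qed.

Lemma im1t_sub (V : zmodType) (t : V -> V) : additive_fn t -> subgrp (im1t t).
Proof.
move=> ht; split; first by exists 0; rewrite (add0 ht) subrr.
by move=> u v [a <-] [c <-]; exists (a - c); rewrite ht subrACA'.
Qed.

Lemma a02_kerN p (M : KData) b z : Kexact0 p M -> kerN p (t0 M b) (a02 M b z).
Proof.
move=> [KM _]; rewrite /kerN -(relN0 _ _ KM) (rel102 _ _ KM).
exact: (add0 (a01_add _ _ KM b)).
Qed.
Arguments a02_kerN {p M b z}.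

Lemma im1t_a02 (M : KData) b x : im1t (t0 M b) x -> exists z, a02 M b z = x.
Proof. by move=> [y <-]; exists (a20 M b y); rewrite t0E. Qed.

Lemma gen_kerN p (V : zmodType) (t : V -> V) x : additive_fn t ->
  gen (kerN p t) x <-> kerN p t x.
Proof. by move=> ht; split; [apply: gen_sub; apply: kerN_sub | apply: gen_in]. Qed.

Lemma gen_im1t (V : zmodType) (t : V -> V) x : additive_fn t ->
  gen (im1t t) x <-> im1t t x.
Proof. by move=> ht; split; [apply: gen_sub; apply: im1t_sub | apply: gen_in]. Qed.

Lemma H0cls_eqP p (V : zmodType) (t : V -> V) x y : additive_fn t ->
  kerN p t x -> kerN p t y -> H0cls p t x = H0cls p t y <-> im1t t (x - y).
Proof.
move=> ht hx hy; rewrite /H0cls cls_eqP ?gen_im1t //; exact/gen_kerN.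
Qed.

Lemma H0cls_sub p (V : zmodType) (t : V -> V) x y : additive_fn t ->
  kerN p t x -> kerN p t y -> H0cls p t (x - y) = H0cls p t x - H0cls p t y.
Proof. by move=> ht hx hy; rewrite /H0cls cls_sub //; exact/gen_kerN. Qed.

Lemma H0_val p (V : zmodType) (t : V -> V) (h : H0 p t) : additive_fn t ->
  kerN p t (sval h) /\ H0cls p t (sval h) = h.
Proof. by move=> ht; split; [apply/gen_kerN => //; apply: SQ_gen | apply: cls_val]. Qed.

Lemma FD2_iff p (M : KData) b x : Kexact0 p M -> kerN p (t0 M b) x ->
  FD2 p M b (H0cls p (t0 M b) x) <-> exists z, a02 M b z = x.
Proof.
move=> hM hx; split; last by move=> [z <-]; exists z.
move=> [z /H0cls_eqP]; case/(_ (t0_add hM) (a02_kerN hM) hx)=> w.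
rewrite t0E => e; exists (z - a20 M b w); rewrite (a02_add _ _ hM.1) e.
by rewrite opprB addrC subrK.
Qed.

Lemma FD2_sub p (M : KData) b : Kexact0 p M -> subgrp (FD2 p M b).
Proof.
move=> hM; split.
  by exists 0; rewrite (add0 (a02_add _ _ hM.1 b)).
move=> u v [z1 <-] [z2 <-]; exists (z1 - z2).
rewrite (a02_add _ _ hM.1) H0cls_sub //; [exact: t0_add hM | exact: a02_kerN hM | exact: a02_kerN hM].
Qed.

Lemma gen_FD2 p (M : KData) b h : Kexact0 p M -> gen (FD2 p M b) h <-> FD2 p M b h.
Proof. by move=> hM; split; [apply: gen_sub; apply: FD2_sub | apply: gen_in]. Qed.

Lemma tilde_iff p (M : KData) b x : Kexact0 p M ->
  tilde (Ftri p M) b x <-> exists z, a02 M b z = x.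
Proof.
move=> hM; split; first by move=> [hx hD]; apply/(FD2_iff hM hx).
move=> [z <-]; split; first exact: a02_kerN.
by exists z.
Qed.

Lemma genT (V : zmodType) (x : V) : gen (fun _ => True) x.
Proof. exact: gen_in. Qed.

Lemma a12_a20 p (M : KData) b z z' : Kexact0 p M ->
  H0cls p (t0 M b) (a02 M b z) = H0cls p (t0 M b) (a02 M b z') -> a12 M b z = a12 M b z'.
Proof.
move=> hM /H0cls_eqP; case/(_ (t0_add hM) (a02_kerN hM) (a02_kerN hM)) => w.
rewrite t0E -(a02_add _ _ hM.1) => /(a02_injective hM) e.
apply/eqP; rewrite -subr_eq0 -(a12_add _ _ hM.1) -e (rel120 _ _ hM.1) //.
Qed.

Lemma Fal_spec p (M : KData) b (u : subg (FD2 p M b)) z y : Kexact0 p M ->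
  H0cls p (t0 M b) (a02 M b z) = sval u ->
  kerN p (t0 M (~~ b)) y -> a10 M (~~ b) y = a12 M b z ->
  Fal p M (FD2 p M) b u = cls (fun _ => True) (FD2 p M (~~ b)) (H0cls p (t0 M (~~ b)) y).
Proof.
move=> hM hz hy hyz; rewrite /Fal.
have [hx hxu] := H0_val (sval u) (t0_add (b:=b) hM).
set x := sval (sval u) in hx hxu *.
have ex1 : exists z0, a02 M b z0 = x.
  by apply/(FD2_iff hM hx); rewrite hxu -hz; exists z.
set z1 := epsilon (inhabits (0 : K2 M b)) _.
have e1 : a02 M b z1 = x := epsilon_spec (inhabits 0) (fun z0 => a02 M b z0 = x) ex1.
have e12 : a12 M b z1 = a12 M b z by apply: (a12_a20 hM); rewrite e1 hxu hz.
set y1 := epsilon _ _.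
have [hy1 e2] : kerN p (t0 M (~~ b)) y1 /\ a10 M (~~ b) y1 = a12 M b z1.
  apply: (epsilon_spec (inhabits 0) (fun y0 : K0 M (~~ b) =>
    Nop p (t0 M (~~ b)) y0 = 0 /\ a10 M (~~ b) y0 = a12 M b z1)).
  by exists y; rewrite e12.
apply/cls_eqP; [exact: genT | exact: genT |].
rewrite -H0cls_sub //; try exact: t0_add hM.
apply/gen_FD2 => //; apply/FD2_iff => //.
  by apply: (kerN_sub p (t0_add hM)).2.
apply/(a10_ker _ hM); rewrite (a10_add _ _ hM.1) e2 e12 hyz subrr //.
Qed.


Lemma Fal_ex p (M : KData) b (u : subg (FD2 p M b)) : Kexact0 p M ->
  exists z y, H0cls p (t0 M b) (a02 M b z) = sval u /\
    kerN p (t0 M (~~ b)) y /\ a10 M (~~ b) y = a12 M b z.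
Proof.
move=> hM; have /(gen_FD2 _ hM) [z hz] := SQ_gen u.
have [y hy] := a10_surj (a12 M b z) hM.
exists z, y; split=> //; split=> //.
by rewrite /kerN -(relN0 _ _ hM.1) hy (rel012 _ _ hM.1).
Qed.

Lemma part1 p (M : KData) : Kexact0 p M -> is_triple p (Ftri p M).
Proof.
move=> hM; have KM := hM.1.
have hal : forall b, additive_fn (Fal p M (FD2 p M) b).
  move=> b u v.
  have [zu [yu [hzu [hyu ezu]]]] := Fal_ex u hM.
  have [zv [yv [hzv [hyv ezv]]]] := Fal_ex v hM.
  rewrite (Fal_spec hM hzu hyu ezu) (Fal_spec hM hzv hyv ezv).
  have hk := kerN_sub p (t0_add (b:=~~b) hM).
  rewrite (@Fal_spec p M b (u - v) (zu - zv) (yu - yv) hM).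
  + by rewrite H0cls_sub // ?cls_sub //; [exact: genT | exact: genT | exact: t0_add hM].
  + rewrite subg_svalB (a02_add _ _ KM) H0cls_sub ?hzu ?hzv //; first exact: t0_add hM.
      exact: a02_kerN hM.
    exact: a02_kerN hM.
  + exact: hk.2.
  + by rewrite (a10_add _ _ KM) (a12_add _ _ KM) ezu ezv.
split => /=.
- by move=> b; exact: t0_add hM.
- move=> b x; apply/eqP; rewrite eq_sym -subr_eq0 -Nop_tele; last exact: t0_add hM.
  by rewrite t0E -(relN0 _ _ KM) (rel201 _ _ KM) (add0 (a02_add _ _ KM b)).
- move=> b x; rewrite t0E; split.
    move=> /(a02_inj hM) /(ex0' _ hM.2.1) [y1 <-].
    by have [y <-] := a10_surj y1 hM; exists y; rewrite (relN0 _ _ KM).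
  move=> [y <-]; rewrite -(relN0 _ _ KM) (rel201 _ _ KM).
  exact: (add0 (a02_add _ _ KM b)).
- move=> b; have [h0 hB] := FD2_sub b hM; split=> //; split=> // k x hx.
  exact: subgrpMn (FD2_sub b hM) hx.
- exact: hal.
- move=> b; apply: inj_surj_bij.
  + apply: add_inj.
      exact: hal.
    move=> w; have [z [y [hz [hy ezy]]]] := Fal_ex w hM.
    rewrite (Fal_spec hM hz hy ezy) => /(cls_eq0 _ (genT _)) /(gen_FD2 _ hM).
    move=> /(FD2_iff hM hy) [z' ez']; move: ezy; rewrite -ez' (rel102 _ _ KM) => /esym.
    move=> /(ex2' _ hM.2.1) [x ex]; apply/subg_val; rewrite subg_sval0 -hz -ex.
    rewrite -(cls0 (kerN p (t0 M b)) (im1t (t0 M b))); apply/H0cls_eqP.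
    * exact: t0_add hM.
    * exact: a02_kerN hM.
    * by rewrite /kerN (add0 (Nop_add p (t0_add hM))).
    by exists x; rewrite subr0 t0E.
  + move=> q; have [hy hyq] := H0_val (sval q) (t0_add (b:=~~b) hM).
    set y := sval (sval q) in hy hyq *.
    have : a01 M (~~ b) (a10 M (~~ b) y) = 0 by rewrite (relN0 _ _ KM).
    move=> /(ex1' _ hM.2.1) [z ez].
    have hD : gen (FD2 p M b) (H0cls p (t0 M b) (a02 M b z)) by apply: gen_in; exists z.
    exists (cls (FD2 p M b) (fun h => h = 0) (H0cls p (t0 M b) (a02 M b z))).
    rewrite (@Fal_spec p M b _ z y hM) ?sval_subg // hyq; exact: cls_val.
Qed.

Lemma mor_kerN p (V W : zmodType) (t : V -> V) (t' : W -> W) (f : V -> W) x :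
  additive_fn f -> (forall x, f (t x) = t' (f x)) -> kerN p t x -> kerN p t' (f x).
Proof. by move=> hf ht hx; rewrite /kerN -(Nop_morph p x hf ht) hx (add0 hf). Qed.

Lemma mor_im1t (V W : zmodType) (t : V -> V) (t' : W -> W) (f : V -> W) x :
  additive_fn f -> (forall x, f (t x) = t' (f x)) -> im1t t x -> im1t t' (f x).
Proof. by move=> hf ht [y <-]; exists (f y); rewrite hf ht. Qed.

Lemma H0sq_cls p (V W : zmodType) (t : V -> V) (t' : W -> W) (f : V -> W) x :
  additive_fn f -> additive_fn t' -> (forall x, f (t x) = t' (f x)) -> kerN p t x ->
  sqmap (A:=kerN p t) (B:=im1t t) (A':=kerN p t') (B':=im1t t') f (H0cls p t x)
  = H0cls p t' (f x).
Proof.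
move=> hf ht' ht hx; rewrite /H0cls sqmap_cls //.
- by move=> y hy; apply: gen_in; apply: mor_kerN hy.
- by move=> y hy; apply: gen_in; apply: mor_im1t hy.
- exact: gen_in.
Qed.

Lemma H0sq_add p (V W : zmodType) (t : V -> V) (t' : W -> W) (f : V -> W) :
  additive_fn f -> (forall x, f (t x) = t' (f x)) ->
  additive_fn (sqmap (A:=kerN p t) (B:=im1t t) (A':=kerN p t') (B':=im1t t') f).
Proof.
move=> hf ht; apply: sqmap_add => //.
- by move=> y hy; apply: gen_in; apply: mor_kerN hy.
- by move=> y hy; apply: gen_in; apply: mor_im1t hy.
Qed.

Lemma Khom_t p (M L : KData) (f : KHom M L) b x : Kexact0 p M -> Kexact0 p L ->
  is_Khom M L f -> h0 f b (t0 M b x) = t0 L b (h0 f b x).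
Proof. by move=> hM hL hf; rewrite /t0 (h0_add _ _ _ hf) (c02 _ _ _ hf) (c20 _ _ _ hf). Qed.

Lemma part2 p (M L : KData) (f : KHom M L) : Kexact0 p M -> Kexact0 p L ->
  is_Khom M L f -> is_tmorph p (Ftri p M) (Ftri p L) (h0 f).
Proof.
move=> hM hL hf.
have hadd : forall b, additive_fn (h0 f b) by move=> b; exact: (h0_add _ _ _ hf b).
have ht : forall b x, h0 f b (t0 M b x) = t0 L b (h0 f b x) by move=> b x; exact: Khom_t hM hL hf.
have hcls : forall b x, kerN p (t0 M b) x ->
    H0map (T:=Ftri p M) (T':=Ftri p L) (h0 f) b (H0cls p (t0 M b) x) = H0cls p (t0 L b) (h0 f b x).
  move=> b x hx; rewrite /H0map /= H0sq_cls //; try exact: ht; try exact: hadd; exact: t0_add hL.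
have hD2 : forall b h, FD2 p M b h -> FD2 p L b (H0map (T:=Ftri p M) (T':=Ftri p L) (h0 f) b h).
  move=> b h [z <-]; rewrite hcls; last exact: a02_kerN hM.
  by exists (h2 f b z); rewrite (c02 _ _ _ hf).
split => //=.
move=> b u.
have [z [y [hz [hy ezy]]]] := Fal_ex u hM.
rewrite (Fal_spec hM hz hy ezy) sqmap_cls //; last exact: genT.
- rewrite hcls //; apply: (Fal_spec hL).
  + rewrite /sqmap sval_subg; last by apply: gen_in; apply: hD2; apply/gen_FD2 => //; exact: SQ_gen.
    by rewrite -hz hcls ?(c02 _ _ _ hf) //; exact: a02_kerN hM.
  + by apply: mor_kerN hy => //; apply: ht.
  + by rewrite -(c10 _ _ _ hf) ezy (c12 _ _ _ hf).
- rewrite /H0map /=; apply: H0sq_add => //; exact: ht.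
- by move=> h _; exact: genT.
- by move=> h hh; apply: gen_in; apply: hD2.
Qed.


Lemma part3 p (M L : KData) (f g : KHom M L) : Kexact0 p M -> Kexact0 p L ->
  is_Khom M L f -> is_Khom M L g -> (forall b x, h0 f b x = h0 g b x) ->
  (forall b y, h1 f b y = h1 g b y) /\ (forall b z, h2 f b z = h2 g b z).
Proof.
move=> hM hL hf hg e; split.
  move=> b y; have [x <-] := a10_surj y hM.
  by rewrite (c10 _ _ _ hf) (c10 _ _ _ hg) e.
move=> b z; apply: (a02_injective hL).
by rewrite -(c02 _ _ _ hf) -(c02 _ _ _ hg) e.
Qed.

Lemma lift_y p (M : KData) b (z : K2 M b) : Kexact0 p M ->
  exists y, kerN p (t0 M (~~ b)) y /\ a10 M (~~ b) y = a12 M b z.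
Proof.
move=> hM; have [y hy] := a10_surj (a12 M b z) hM.
by exists y; split=> //; rewrite /kerN -(relN0 _ _ hM.1) hy (rel012 _ _ hM.1).
Qed.

Lemma part4 p (M L : KData) (f0 : forall b, K0 M b -> K0 L b) : Kexact0 p M -> Kexact0 p L ->
  is_tmorph p (Ftri p M) (Ftri p L) f0 ->
  exists f : KHom M L, is_Khom M L f /\ forall b x, h0 f b x = f0 b x.
Proof.
move=> hM hL tm.
have KM := hM.1; have KL := hL.1.
have hadd : forall b, additive_fn (f0 b) := tm_add _ _ _ _ tm.
have ht : forall b x, f0 b (t0 M b x) = t0 L b (f0 b x) := tm_t _ _ _ _ tm.
have hD2 : forall b h, FD2 p M b h ->
  FD2 p L b (H0map (T:=Ftri p M) (T':=Ftri p L) f0 b h) := tm_D2 _ _ _ _ tm.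
have hcls : forall b x, kerN p (t0 M b) x ->
    H0map (T:=Ftri p M) (T':=Ftri p L) f0 b (H0cls p (t0 M b) x) = H0cls p (t0 L b) (f0 b x).
  move=> b x hx; rewrite /H0map /= H0sq_cls //; try exact: ht; try exact: hadd; exact: t0_add hL.
have hz : forall b (z : K2 M b), exists z', a02 L b z' = f0 b (a02 M b z).
  move=> b z; have hx := a02_kerN (z:=z) hM.
  have hx' : kerN p (t0 L b) (f0 b (a02 M b z)) := mor_kerN (hadd b) (ht b) hx.
  by have := hD2 b _ (ex_intro _ z erefl); rewrite hcls // => /(FD2_iff hL hx').
pose h2 b (z : K2 M b) := epsilon (inhabits 0) (fun z' => a02 L b z' = f0 b (a02 M b z)).
have e2 : forall b z, a02 L b (h2 b z) = f0 b (a02 M b z).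
  move=> b z; apply: (epsilon_spec (inhabits 0) (fun z' => a02 L b z' = f0 b (a02 M b z))).
  exact: hz.
pose h1 b (y : K1 M b) := a10 L b (f0 b (epsilon (inhabits 0) (fun x => a10 M b x = y))).
have e1 : forall b x, h1 b (a10 M b x) = a10 L b (f0 b x).
  move=> b x; rewrite /h1; set x0 := epsilon _ _.
  have ex0 : a10 M b x0 = a10 M b x.
    by apply: (epsilon_spec (inhabits 0) (fun x' => a10 M b x' = a10 M b x)); exists x.
  apply/eqP; rewrite -subr_eq0 -(a10_add _ _ KL) -hadd; apply/eqP.
  have /(a10_ker _ hM) [z ez] : a10 M b (x0 - x) = 0 by rewrite (a10_add _ _ KM) ex0 subrr.
  by rewrite -ez -e2 (rel102 _ _ KL).
have h2add : forall b, additive_fn (h2 b).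
  move=> b z1 z2; apply: (a02_injective hL).
  by rewrite (a02_add _ _ KL) !e2 (a02_add _ _ KM) hadd.
exists (@KH M L f0 h1 h2); split => //; split => //=.
- move=> b y1 y2; have [x1 <-] := a10_surj y1 hM; have [x2 <-] := a10_surj y2 hM.
  by rewrite -(a10_add _ _ KM) !e1 hadd (a10_add _ _ KL).
- move=> b y; have [x <-] := a10_surj y hM.
  rewrite e1 (relN0 _ _ KM) (relN0 _ _ KL); apply: Nop_morph => //; exact: ht.
- move=> b x; apply: (a02_injective hL).
  by rewrite e2 -t0E -t0E hadd ht.
- move=> b z.
  have [y [hy ey]] := lift_y z hM.
  have [y' [hy' ey']] := lift_y (h2 b z) hL.
  rewrite -ey e1 -ey'.
  have hgz : gen (FD2 p M b) (H0cls p (t0 M b) (a02 M b z)) by apply: gen_in; exists z.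
  set u := cls (FD2 p M b) (fun h => h = 0) (H0cls p (t0 M b) (a02 M b z)).
  have hu : sval u = H0cls p (t0 M b) (a02 M b z) by rewrite sval_subg.
  have E := tm_al _ _ _ _ tm b u; rewrite /= (Fal_spec hM (esym hu) hy ey) in E.
  have hH0add : forall b, additive_fn (H0map (T:=Ftri p M) (T':=Ftri p L) f0 b).
    by move=> b'; exact: (H0sq_add (p:=p) (hadd b') (ht b')).
  rewrite [RHS]sqmap_cls in E; first last.
  + exact: genT.
  + by move=> h hh; apply: gen_in; apply: hD2.
  + by move=> h _; exact: genT.
  + exact: hH0add.
  move: E; rewrite hcls // (Fal_spec hL (z:=h2 b z) (y:=y')) //; last first.
    rewrite /sqmap sval_subg hu hcls ?e2 //.
    - exact: a02_kerN hM.
    - by rewrite -e2; apply: gen_in; exists (h2 b z).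
    - exact: a02_kerN hM.
  have hfy : kerN p (t0 L (~~ b)) (f0 (~~ b) y) := mor_kerN (hadd _) (ht _) hy.
  move=> /(cls_eqP _ (genT _) (genT _)).
  rewrite -H0cls_sub //; last exact: t0_add hL.
  move=> /(gen_FD2 _ hL) /(FD2_iff hL ((kerN_sub p (t0_add hL)).2 _ _ hy' hfy)) [w ew].
  apply/esym/eqP; rewrite -subr_eq0 -(a10_add _ _ KL) -ew (rel102 _ _ KL) //.
- move=> b y; rewrite hM.2.2 hL.2.2; exact: add0 (h2add _).
Qed.


Lemma part6 p (M L : KData) (f : KHom M L) : Kexact0 p M -> Kexact0 p L -> is_Khom M L f ->
     ((forall b, injective (h0 f b) /\ injective (h1 f b) /\ injective (h2 f b)) <->
      ((forall b, injective (h0 f b)) /\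
       (forall b x, tilde (Ftri p L) b (h0 f b x) <-> tilde (Ftri p M) b x))).
Proof.
move=> hM hL hf; split.
  move=> H; split; first by move=> b; case: (H b).
  move=> b x; rewrite (tilde_iff _ hL) (tilde_iff _ hM); split.
    move=> [z' ez']; apply/(a10_ker _ hM); have [_ [hi1 _]] := H b.
    apply: hi1; rewrite (c10 _ _ _ hf) -ez' (rel102 _ _ hL.1).
    exact/esym/(add0 (h1_add _ _ _ hf b)).
  by move=> [z <-]; exists (h2 f b z); rewrite (c02 _ _ _ hf).
move=> [H0 Ht] b; split; first exact: H0; split.
  apply: add_inj; first exact: (h1_add _ _ _ hf b).
  move=> y; have [x <-] := a10_surj y hM; rewrite (c10 _ _ _ hf).
  move=> /(a10_ker _ hL) /(tilde_iff _ hL) /(Ht b) /(tilde_iff _ hM) [z <-].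
  exact: (rel102 _ _ hM.1).
move=> z1 z2 e; apply: (a02_injective hM); apply: (H0 b).
by rewrite !(c02 _ _ _ hf) e.
Qed.

Lemma part7 p (M L : KData) (f : KHom M L) : Kexact0 p M -> Kexact0 p L -> is_Khom M L f ->
     ((forall b, surj (h0 f b) /\ surj (h1 f b) /\ surj (h2 f b)) <->
      ((forall b, surj (h0 f b)) /\
       (forall b y, tilde (Ftri p L) b y <->
                    exists x, tilde (Ftri p M) b x /\ h0 f b x = y))).
Proof.
move=> hM hL hf; split.
  move=> H; split; first by move=> b; case: (H b).
  move=> b y; rewrite (tilde_iff _ hL); split.
    move=> [z' <-]; have [_ [_ hs2]] := H b; have [z <-] := hs2 z'.
    exists (a02 M b z); split; first by apply/(tilde_iff _ hM); exists z.
    exact: (c02 _ _ _ hf).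
  move=> [x [/(tilde_iff _ hM) [z <-] <-]]; exists (h2 f b z).
  by rewrite (c02 _ _ _ hf).
move=> [H0 Ht] b; split; first exact: H0; split.
  move=> y'; have [x' <-] := a10_surj y' hL; have [x <-] := H0 b x'.
  by exists (a10 M b x); rewrite (c10 _ _ _ hf).
move=> z'; have : tilde (Ftri p L) b (a02 L b z') by apply/(tilde_iff _ hL); exists z'.
move=> /(Ht b) [x [/(tilde_iff _ hM) [z <-] e]]; exists z.
by apply: (a02_injective hL); rewrite -(c02 _ _ _ hf).
Qed.


Definition Ua p (T : TData p) b (z : subg (tilde T b)) : subg (D2 T b) :=
  cls (D2 T b) (fun h => h = 0) (H0cls p (tt T b) (sval z)).
Definition Rq p (T : TData p) b (q : quog (D2 T b)) : quog (tilde T b) :=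
  cls (fun _ => True) (tilde T b) (sval (sval q)).

Definition Kc p (T : TData p) : KData :=
  @KD (T0 T) (fun b => quog (tilde T b)) (fun b => subg (tilde T b))
    (fun b x => cls (fun _ => True) (tilde T b) x)
    (fun b y => Nop p (tt T b) (sval y))
    (fun b x => cls (tilde T b) (fun y => y = 0) (x - tt T b x))
    (fun b z => sval z)
    (fun b z => Rq (al T b (Ua z)))
    (fun b _ => 0).

Lemma Nop_ext p (V : zmodType) (t t' : V -> V) x :
  (forall y, t y = t' y) -> Nop p t x = Nop p t' x.
Proof.
move=> e; rewrite /Nop; apply: eq_bigr => i _.
by elim: (nat_of_ord i) => [|n IH] //=; rewrite IH e.
Qed.

Lemma Nop_id p (V : zmodType) (x : V) : Nop p (fun y => y) x = x *+ p.
Proof.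
rewrite /Nop (eq_bigr (fun _ => x)); first by rewrite sumr_const card_ord.
by move=> i _; elim: (nat_of_ord i).
Qed.

Lemma sum_sub (V : zmodType) (A : V -> Prop) n (F : 'I_n -> V) :
  subgrp A -> (forall i, A (F i)) -> A (\sum_(i < n) F i).
Proof.
move=> hA hF; elim: n F hF => [|n IH] F hF; first by rewrite big_ord0; exact: hA.1.
by rewrite big_ord_recr /=; apply: subgrpD => //; apply: IH.
Qed.

Lemma Nop_tp p (V : zmodType) (t : V -> V) x : additive_fn t -> iter p t x = x ->
  Nop p t (x - t x) = 0.
Proof.
move=> ht hp; rewrite (Nop_add p ht) -(Nop_morph p x ht (fun y => erefl)).
by rewrite Nop_tele // hp subrr.
Qed.

Lemma NopB_im1t p (V : zmodType) (t : V -> V) x : additive_fn t ->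
  im1t t (Nop p t x - x *+ p).
Proof.
move=> ht; have -> : x *+ p = \sum_(i < p) x by rewrite sumr_const card_ord.
rewrite /Nop -sumrB; apply: sum_sub; first exact: im1t_sub.
move=> i; exists (- Nop i t x); rewrite (addN _ ht) opprK addrC -opprB.
by rewrite -Nop_tele // opprB.
Qed.

Lemma tl_sub p (T : TData p) b : is_triple p T -> subgrp (tilde T b).
Proof.
move=> hT; have ht := tt_add _ _ hT b; have [D0 [DB _]] := D2_sub _ _ hT b.
split.
  by split; [rewrite (add0 (Nop_add p ht)) | rewrite /H0cls cls0].
move=> u v [hu1 hu2] [hv1 hv2]; split.
  by rewrite (Nop_add p ht) hu1 hv1 subrr.
by rewrite H0cls_sub //; apply: DB.
Qed.

Lemma gen_tl p (T : TData p) b x : is_triple p T -> gen (tilde T b) x <-> tilde T b x.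
Proof. by move=> hT; split; [apply: gen_sub; apply: tl_sub | apply: gen_in]. Qed.

Lemma im1t_kerN p (T : TData p) b x : is_triple p T -> im1t (tt T b) x -> kerN p (tt T b) x.
Proof. by move=> hT [y <-]; apply: Nop_tp; [exact: tt_add _ _ hT b | exact: tt_p]. Qed.

Lemma im1t_tl p (T : TData p) b x : is_triple p T -> im1t (tt T b) x -> tilde T b x.
Proof.
move=> hT hx; have hk := im1t_kerN hT hx; split=> //.
have -> : H0cls p (tt T b) x = 0.
  by apply/cls_eq0; [apply/gen_kerN => //; exact: tt_add _ _ hT b | exact: gen_in].
exact: (D2_sub _ _ hT b).1.
Qed.

Lemma sval_a20 p (T : TData p) b x : is_triple p T ->
  sval (a20 (Kc T) b x) = x - tt T b x.
Proof.
move=> hT; change (sval (cls (tilde T b) (fun y => y = 0) (x - tt T b x)) = x - tt T b x).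
by rewrite sval_subg //; apply/gen_tl => //; apply: im1t_tl => //; exists x. Qed.

Lemma t0Kc p (T : TData p) b x : is_triple p T -> t0 (Kc T) b x = tt T b x.
Proof.
move=> hT; change (x - sval (a20 (Kc T) b x) = tt T b x).
by rewrite (sval_a20 _ hT) opprB addrC subrK.
Qed.

Lemma kerN_Kc p (T : TData p) b x : is_triple p T ->
  kerN p (t0 (Kc T) b) x <-> kerN p (tt T b) x.
Proof. by move=> hT; rewrite /kerN (Nop_ext p x (fun y => t0Kc y hT)). Qed.

Lemma im1t_Kc p (T : TData p) b x : is_triple p T ->
  im1t (t0 (Kc T) b) x <-> im1t (tt T b) x.
Proof. by move=> hT; split=> -[y <-]; exists y; rewrite t0Kc. Qed.

Lemma a01_cls p (T : TData p) b x : is_triple p T ->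
  a01 (Kc T) b (cls (fun _ => True) (tilde T b) x) = Nop p (tt T b) x.
Proof.
move=> hT; change (Nop p (tt T b) (sval (cls (fun _ => True) (tilde T b) x)) = Nop p (tt T b) x).
apply/eqP; rewrite -subr_eq0 -(Nop_add p (tt_add _ _ hT b)); apply/eqP.
by have /(gen_tl _ hT) [] := cls_rel (B:=tilde T b) (genT x).
Qed.

Lemma clsT_eqP p (T : TData p) b x y : is_triple p T ->
  cls (fun _ => True) (tilde T b) x = cls (fun _ => True) (tilde T b) y <-> tilde T b (x - y).
Proof. by move=> hT; rewrite cls_eqP ?gen_tl //; exact: genT. Qed.

Lemma H0T_val p (T : TData p) b (h : H0 p (tt T b)) : is_triple p T ->
  kerN p (tt T b) (sval h) /\ H0cls p (tt T b) (sval h) = h.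
Proof. by move=> hT; apply: H0_val; exact: tt_add _ _ hT b. Qed.

Lemma tl_D2 p (T : TData p) b x : is_triple p T -> kerN p (tt T b) x ->
  tilde T b x <-> D2 T b (H0cls p (tt T b) x).
Proof. by move=> hT hx; split=> [[]|] //. Qed.

Lemma gen_D2 p (T : TData p) b h : is_triple p T -> gen (D2 T b) h <-> D2 T b h.
Proof.
move=> hT; have [D0 [DB _]] := D2_sub _ _ hT b.
by split; [apply: gen_sub | apply: gen_in].
Qed.

Lemma Rq_H0cls p (T : TData p) b x : is_triple p T -> kerN p (tt T b) x ->
  Rq (cls (fun _ => True) (D2 T b) (H0cls p (tt T b) x)) = cls (fun _ => True) (tilde T b) x.
Proof.
move=> hT hx; rewrite /Rq; apply/(clsT_eqP _ _ hT).
set q := cls _ _ _.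
have [hr hrq] := H0T_val (sval q) hT.
have ht := tt_add _ _ hT b.
have hk : kerN p (tt T b) (sval (sval q) - x) by apply: (kerN_sub p ht).2.
apply/(tl_D2 hT hk); rewrite H0cls_sub // hrq.
by apply/(gen_D2 _ hT); apply: cls_rel; exact: genT.
Qed.

Lemma tl_val p (T : TData p) b (z : subg (tilde T b)) : is_triple p T -> tilde T b (sval z).
Proof. by move=> hT; apply/(gen_tl _ hT); exact: SQ_gen. Qed.

Lemma quogE p (T : TData p) b (q : quog (D2 T b)) : is_triple p T ->
  q = cls (fun _ => True) (D2 T b) (H0cls p (tt T b) (sval (sval q))).
Proof. by move=> hT; rewrite (H0T_val _ hT).2 cls_val. Qed.

Lemma Rq_add p (T : TData p) b : is_triple p T -> additive_fn (@Rq p T b).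
Proof.
move=> hT q1 q2; have ht := tt_add _ _ hT b.
have [k1 _] := H0T_val (sval q1) hT; have [k2 _] := H0T_val (sval q2) hT.
rewrite {1}(quogE q1 hT) {1}(quogE q2 hT) -cls_sub ?genT //.
rewrite -(H0cls_sub ht k1 k2) Rq_H0cls //.
  by rewrite cls_sub //; exact: genT.
  exact: (kerN_sub p ht).2.
all: exact: genT.
Qed.

Lemma Rq_eq0 p (T : TData p) b (q : quog (D2 T b)) : is_triple p T -> Rq q = 0 -> q = 0.
Proof.
move=> hT; rewrite /Rq => /(cls_eq0 _ (genT _)) /(gen_tl _ hT) [_ hD].
rewrite (quogE q hT); apply/(cls_eq0 _ (genT _)); exact: gen_in.
Qed.

Lemma sval_Ua p (T : TData p) b (z : subg (tilde T b)) : is_triple p T ->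
  sval (Ua z) = H0cls p (tt T b) (sval z).
Proof. by move=> hT; rewrite /Ua sval_subg //; apply: gen_in; case: (tl_val z hT). Qed.

Lemma Ua_add p (T : TData p) b : is_triple p T -> additive_fn (@Ua p T b).
Proof.
move=> hT z1 z2; apply/subg_val; rewrite subg_svalB !sval_Ua // subg_svalB.
by rewrite H0cls_sub //; [exact: tt_add _ _ hT b | case: (tl_val z1 hT) | case: (tl_val z2 hT)].
Qed.

Lemma al_inj p (T : TData p) b : is_triple p T -> injective (al T b).
Proof. by move=> hT; apply: bij_inj; exact: al_bij _ _ hT b. Qed.

Lemma al0 p (T : TData p) b : is_triple p T -> al T b 0 = 0.
Proof. by move=> hT; exact: add0 (al_add _ _ hT b). Qed.

Lemma a12Kc_add p (T : TData p) b : is_triple p T -> additive_fn (a12 (Kc T) b).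
Proof.
move=> hT z1 z2; change (Rq (al T b (Ua (z1 - z2))) = Rq (al T b (Ua z1)) - Rq (al T b (Ua z2))).
by rewrite (Ua_add hT) (al_add _ _ hT) (Rq_add hT).
Qed.

Lemma nn0 (G : grp) b : nn G b 0 = 0.
Proof. by case: b. Qed.

Lemma cls_muln (V : zmodType) (A B : V -> Prop) x n : gen A x ->
  cls A B (x *+ n) = cls A B x *+ n.
Proof.
move=> hx; elim: n => [|n IH]; first by rewrite !mulr0n.
by rewrite !mulrS cls_add ?IH //; apply: (@subgrpMn _ (gen A)) => //; exact: subgrp_gen.
Qed.

Lemma sval_add (H : zmodType) (D : H -> Prop) : additive_fn (fun z : subg D => sval z).
Proof. by move=> z1 z2; exact: subg_svalB. Qed.

Lemma Kc_mod p (T : TData p) : is_triple p T -> is_Kmodule p (Kc T).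
Proof.
move=> hT.
have ht : forall b, additive_fn (tt T b) := tt_add _ _ hT.
have a12_0 : forall b, a12 (Kc T) b 0 = 0 by move=> b; exact: add0 (a12Kc_add hT).
split.
- by move=> b x y; rewrite /= cls_sub //; exact: genT.
- move=> b y1 y2; rewrite -[y1]cls_val -[y2]cls_val -cls_sub; try exact: genT.
  by rewrite !a01_cls // (Nop_add p (ht b)).
- move=> b x y; change (cls (tilde T b) (fun y => y = 0) ((x - y) - tt T b (x - y)) =
     cls (tilde T b) (fun y => y = 0) (x - tt T b x) - cls (tilde T b) (fun y => y = 0) (y - tt T b y)).
  rewrite ht subrACA' cls_sub //; apply/gen_tl => //; apply: im1t_tl => //; eexists; reflexivity.
- by move=> b; exact: sval_add.
- by move=> b; exact: a12Kc_add hT.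
- by move=> b y1 y2; rewrite /= subrr.
- move=> b z.
  change (a01 (Kc T) (~~b) (cls (fun _ => True) (tilde T (~~ b)) (sval (sval (al T b (Ua z))))) = 0).
  by rewrite a01_cls //; exact: (H0T_val _ hT).1.
- by move=> b y; exact: subg_sval0.
- move=> b z; change (cls (fun _ => True) (tilde T b) (sval z) = 0).
  by apply/cls_eq0; [exact: genT | exact: SQ_gen].
- move=> b x; change (Rq (al T b (Ua (a20 (Kc T) b x))) = 0).
  have -> : Ua (a20 (Kc T) b x) = 0.
    apply/subg_val; rewrite sval_Ua // subg_sval0 sval_a20 //.
    apply/cls_eq0; last by apply: gen_in; exists x.
    by apply/gen_kerN => //; apply: im1t_kerN => //; exists x.
  by rewrite al0 // (add0 (Rq_add (b:=~~b) hT)).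
- move=> b y; change (cls (tilde T b) (fun y => y = 0)
     (Nop p (tt T b) (sval y) - tt T b (Nop p (tt T b) (sval y))) = 0).
  by rewrite Nop_tele // tt_p // subrr.
- by [].
- move=> b x; rewrite a01_cls //; apply: Nop_ext => y; by rewrite t0Kc.
- move=> b y; rewrite (Nop_ext p y (t' := fun y => y)); last first.
    move=> y'; rewrite /s1; have -> : a21 (Kc T) b y' = 0 by [].
    by rewrite a12_0 nn0 subr0.
  rewrite Nop_id -[y]cls_val -cls_muln; last exact: genT.
  apply/(clsT_eqP _ _ hT); rewrite a01_cls //.
  by apply: im1t_tl => //; apply: NopB_im1t.
- move=> b z; rewrite (Nop_ext p z (t := s2 (Kc T) b) (t' := fun y => y)); last first.
    move=> y'; rewrite /s2; have -> : a21 (Kc T) (~~ b) (a12 (Kc T) b y') = 0 by [].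
    by rewrite nn0 subr0.
  rewrite Nop_id.
  suff -> : Nop p (t2 (Kc T) b) z = 0 by rewrite add0r.
  apply/subg_val; rewrite subg_sval0.
  rewrite (Nop_morph p z (f := fun w : subg (tilde T b) => sval w) (t' := tt T b)).
  + by case: (tl_val z hT).
  + exact: sval_add.
  + move=> w; change (sval (w - a20 (Kc T) b (sval w)) = tt T b (sval w)).
    by rewrite subg_svalB sval_a20 // opprB addrC subrK.
Qed.

Lemma a20Kc_eq0 p (T : TData p) b x : is_triple p T ->
  a20 (Kc T) b x = 0 <-> x - tt T b x = 0.
Proof. by move=> hT; rewrite subg_val subg_sval0 sval_a20. Qed.

Lemma Kc_exact p (T : TData p) : is_triple p T -> is_exact (Kc T).
Proof.
move=> hT; have KM := Kc_mod hT.
have ht : forall b, additive_fn (tt T b) := tt_add _ _ hT.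
split.
- by move=> b y; split=> // _; exists (sval y); exact: cls_val.
- move=> b z; split.
    move=> e; exists 0; apply/subg_val; rewrite subg_sval0; exact/esym.
  by move=> [y <-]; exact: subg_sval0.
- move=> b x; split.
    move=> /(cls_eq0 _ (genT _)) hx; exists (cls (tilde T b) (fun y => y = 0) x).
    exact: sval_subg.
  by move=> [z <-]; exact: (rel102 _ _ KM).
- move=> b z; split; last by move=> [x <-]; exact: (rel120 _ _ KM).
  change (Rq (al T b (Ua z)) = 0 -> exists x, a20 (Kc T) b x = z).
  move=> /(Rq_eq0 hT); rewrite -(al0 b hT) => /(al_inj hT) /subg_val.
  rewrite subg_sval0 sval_Ua //; have [hk _] := tl_val z hT.
  move=> /(cls_eq0 _ (proj2 (gen_kerN p _ (ht b)) hk)) /(gen_im1t _ (ht b)) [x ex].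
  by exists x; apply/subg_val; rewrite sval_a20.
- move=> b y; split; last by move=> [z <-]; exact: (rel012 _ _ KM).
  change (Nop p (tt T (~~ b)) (sval y) = 0 -> exists z, a12 (Kc T) b z = y) => hy.
  have [g _ hg] := al_bij _ _ hT b.
  set q := cls (fun _ => True) (D2 T (~~ b)) (H0cls p (tt T (~~ b)) (sval y)).
  set u := g q.
  have [hk hu] := H0T_val (sval u) hT.
  have hx : tilde T b (sval (sval u)).
    by split=> //; rewrite hu; apply/(gen_D2 _ hT); exact: SQ_gen.
  exists (cls (tilde T b) (fun y => y = 0) (sval (sval u))).
  change (Rq (al T b (Ua (cls (tilde T b) (fun y => y = 0) (sval (sval u))))) = y).
  have -> : Ua (cls (tilde T b) (fun y => y = 0) (sval (sval u))) = u.
    by apply/subg_val; rewrite sval_Ua // sval_subg //; exact: gen_in.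
  by rewrite /u hg Rq_H0cls // cls_val.
- move=> b x; rewrite a20Kc_eq0 // tt_ker //; split.
    by move=> [y0 <-]; exists (cls (fun _ => True) (tilde T b) y0); rewrite a01_cls.
  by move=> [y <-]; exists (sval y).
Qed.

Lemma Kc_exact0 p (T : TData p) : is_triple p T -> Kexact0 p (Kc T).
Proof. by move=> hT; split; [exact: Kc_mod | split; [exact: Kc_exact | by []]]. Qed.


Lemma cross_cls p (T : TData p) b x : is_triple p T -> kerN p (tt T b) x ->
  H0cls p (tt T b) (sval (H0cls p (t0 (Kc T) b) x)) = H0cls p (tt T b) x.
Proof.
move=> hT hx; have hM := Kc_exact0 hT.
have htM : additive_fn (t0 (Kc T) b) := t0_add hM.
have ht := tt_add _ _ hT b.
have hxM : kerN p (t0 (Kc T) b) x by apply/(kerN_Kc _ hT).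
have [hs _] := H0_val (H0cls p (t0 (Kc T) b) x) htM.
apply/H0cls_eqP => //; first by apply/(kerN_Kc _ hT).
apply/(im1t_Kc _ hT); apply/(gen_im1t _ htM).
by apply: cls_rel; apply/gen_kerN.
Qed.

Lemma part5 p (T : TData p) : is_triple p T ->
     exists M : KData, Kexact0 p M /\
       exists (f : forall b, T0 T b -> K0 M b) (g : forall b, K0 M b -> T0 T b),
         is_tmorph p T (Ftri p M) f /\ is_tmorph p (Ftri p M) T g /\
         (forall b x, g b (f b x) = x) /\ (forall b x, f b (g b x) = x).
Proof.
move=> hT; have hM := Kc_exact0 hT.
have ht : forall b, additive_fn (tt T b) := tt_add _ _ hT.
have htM : forall b, additive_fn (t0 (Kc T) b) := fun b => t0_add hM.
exists (Kc T); split=> //.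
exists (fun b x => x), (fun b x => x).
have idadd : forall b, additive_fn (fun x : T0 T b => x) by [].
have D2f : forall b h, D2 T b h ->
    FD2 p (Kc T) b (H0map (T:=T) (T':=Ftri p (Kc T)) (fun b x => x) b h).
  move=> b h hh; have [hk hv] := H0T_val h hT.
  have hx : tilde T b (sval h) by split=> //; rewrite hv.
  exists (cls (tilde T b) (fun y => y = 0) (sval h)).
  change (H0cls p (t0 (Kc T) b) (sval (cls (tilde T b) (fun y => y = 0) (sval h))) =
          H0cls p (t0 (Kc T) b) (sval h)).
  by rewrite sval_subg //; apply: gen_in.
have D2g : forall b h, FD2 p (Kc T) b h ->
    D2 T b (H0map (T:=Ftri p (Kc T)) (T':=T) (fun b x => x) b h).
  move=> b h [z <-]; have [hk hD] := tl_val z hT.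
  change (D2 T b (H0cls p (tt T b) (sval (H0cls p (t0 (Kc T) b) (sval z))))).
  by rewrite cross_cls.
split; [|split; [|by []]].
- split => //=.
  + by move=> b x; rewrite t0Kc.
  + move=> b u.
    have [hk hu] := H0T_val (sval u) hT.
    have hx : tilde T b (sval (sval u)).
      by split=> //; rewrite hu; apply/(gen_D2 _ hT); exact: SQ_gen.
    set z := cls (tilde T b) (fun y => y = 0) (sval (sval u)).
    have hz : sval z = sval (sval u) by rewrite sval_subg //; apply: gen_in.
    have hUz : Ua z = u by apply/subg_val; rewrite sval_Ua // hz.
    rewrite (@Fal_spec p (Kc T) b _ z (sval (sval (al T b u))) hM) //.
    * change (H0cls p (t0 (Kc T) b) (sval z) =
        sval (cls (FD2 p (Kc T) b) (fun h => h = 0)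
           (H0cls p (t0 (Kc T) b) (sval (sval u))))).
      rewrite sval_subg; first by rewrite hz.
      apply: gen_in; exact: (D2f b (sval u) (proj1 (gen_D2 _ hT) (SQ_gen _))).
    * rewrite /kerN (Nop_ext p _ (fun y => t0Kc y hT)).
      by case: (H0T_val (sval (al T b u)) hT).
    * by change (Rq (al T b u) = Rq (al T b (Ua z))); rewrite hUz.
- split => //.
  + by move=> b x /=; rewrite t0Kc.
  + move=> b u.
    have [z [y [hz [hy ezy]]]] := Fal_ex u hM.
    have E : al (Ftri p (Kc T)) b u =
      cls (fun _ => True) (FD2 p (Kc T) (~~b)) (H0cls p (t0 (Kc T) (~~b)) y) :=
      Fal_spec hM hz hy ezy.
    have hyT : kerN p (tt T (~~ b)) y by apply/(kerN_Kc _ hT).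
    have hcomm : forall b' (x : T0 T b'), (fun x => x) (t0 (Kc T) b' x) = tt T b' x.
      by move=> b' x; rewrite t0Kc.
    rewrite E sqmap_cls; first last.
    * exact: genT.
    * by move=> h hh; apply: gen_in; apply: D2g.
    * by move=> h _; exact: genT.
    * exact: (H0sq_add (p:=p) (idadd (~~ b)) (hcomm (~~ b))).
    change (al T b (sqmap (H0map (T:=Ftri p (Kc T)) (T':=T) (fun b => id) b) u) =
      cls (fun _ => True) (D2 T (~~ b))
        (sqmap (A:=kerN p (t0 (Kc T) (~~b))) (B:=im1t (t0 (Kc T) (~~b)))
               (A':=kerN p (tt T (~~b))) (B':=im1t (tt T (~~b))) (fun x => x)
           (H0cls p (t0 (Kc T) (~~ b)) y))).
    rewrite H0sq_cls //; last by move=> x'; rewrite t0Kc.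
    have EU : sqmap (H0map (T:=Ftri p (Kc T)) (T':=T) (fun b => id) b) u = Ua z.
      apply/subg_val; rewrite sval_Ua //.
      rewrite /sqmap sval_subg; last first.
        apply: gen_in; apply: D2g; apply/(gen_FD2 _ hM); exact: SQ_gen.
      rewrite -hz /H0map H0sq_cls //; try exact: (a02_kerN hM).
      by move=> x' /=; rewrite t0Kc.
    rewrite EU.
    have e1 : Rq (al T b (Ua z)) = Rq (cls (fun _ => True) (D2 T (~~ b)) (H0cls p (tt T (~~ b)) y)).
      by rewrite Rq_H0cls //; exact/esym.
    apply/eqP; rewrite -subr_eq0; apply/eqP; apply: (Rq_eq0 hT).
    by rewrite (Rq_add hT) e1 subrr.
Qed.


Unset Implicit Arguments.
Close Scope ring_scope.

Theorem theorem8p1 (p : nat) (hp : prime p) :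
  (* the functor M |-> (M_0, dot M_2, dot alpha) lands in the category of triples *)
  (forall M : KData, Kexact0 p M -> is_triple p (Ftri p M))
  /\ (* ... and sends K-module morphisms f to triple morphisms f_0 *)
  (forall (M L : KData) (f : KHom M L), Kexact0 p M -> Kexact0 p L -> is_Khom M L f ->
     is_tmorph p (Ftri p M) (Ftri p L) (h0 f))
  /\ (* faithful *)
  (forall (M L : KData) (f g : KHom M L), Kexact0 p M -> Kexact0 p L ->
     is_Khom M L f -> is_Khom M L g -> (forall b x, h0 f b x = h0 g b x) ->
     (forall b y, h1 f b y = h1 g b y) /\ (forall b z, h2 f b z = h2 g b z))
  /\ (* full *)
  (forall (M L : KData) (f0 : forall b, K0 M b -> K0 L b), Kexact0 p M -> Kexact0 p L ->
     is_tmorph p (Ftri p M) (Ftri p L) f0 ->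
     exists f : KHom M L, is_Khom M L f /\ forall b x, h0 f b x = f0 b x)
  /\ (* essentially surjective *)
  (forall T : TData p, is_triple p T ->
     exists M : KData, Kexact0 p M /\
       exists (f : forall b, T0 T b -> K0 M b) (g : forall b, K0 M b -> T0 T b),
         is_tmorph p T (Ftri p M) f /\ is_tmorph p (Ftri p M) T g /\
         (forall b x, g b (f b x) = x) /\ (forall b x, f b (g b x) = x))
  /\ (* injectivity criterion *)
  (forall (M L : KData) (f : KHom M L), Kexact0 p M -> Kexact0 p L -> is_Khom M L f ->
     ((forall b, injective (h0 f b) /\ injective (h1 f b) /\ injective (h2 f b)) <->
      ((forall b, injective (h0 f b)) /\
       (forall b x, tilde (Ftri p L) b (h0 f b x) <-> tilde (Ftri p M) b x))))
  /\ (* surjectivity criterion *)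
  (forall (M L : KData) (f : KHom M L), Kexact0 p M -> Kexact0 p L -> is_Khom M L f ->
     ((forall b, surj (h0 f b) /\ surj (h1 f b) /\ surj (h2 f b)) <->
      ((forall b, surj (h0 f b)) /\
       (forall b y, tilde (Ftri p L) b y <->
                    exists x, tilde (Ftri p M) b x /\ h0 f b x = y)))).
Proof.
split; first by move=> M hM; exact: (part1 hM).
split; first by move=> M L f hM hL hf; exact: (part2 hM hL hf).
split; first by move=> M L f g hM hL hf hg e; exact: (part3 hM hL hf hg e).
split; first by move=> M L f0 hM hL tm; exact: (part4 hM hL tm).
split; first by move=> T hT; exact: (part5 hT).
split; first by move=> M L f hM hL hf; exact: (part6 hM hL hf).
by move=> M L f hM hL hf; exact: (part7 hM hL hf).
Qed.
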